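(* Let $\beta\in(0,1)$. With the medium-expectation rounding defined in the context, suppose $|\mathcal{M}_1^*(k)|\le k^\beta$. If $X_i$ ($i\in\mathcal{M}_1^*(k)$) are independent indicators with $\mathbb{E}[X_i]=p_i$ and $Y_i$ ($i\in\mathcal{M}_1^*(k)$) are independent indicators with $\mathbb{E}[Y_i]=q_i$, then $$\left\|\sum_{i\in\mathcal{M}_1^*(k)}X_i-\sum_{i\in\mathcal{M}_1^*(k)}Y_i\right\|\le\frac{1}{k^{1-\beta}}.$$
   Context: $\|\cdot\|$ is total variation distance. Let $k$ be a positive integer, $\alpha\in(0,1)$, and $p_1,\dots,p_n\in[0,1]$. For $j=0,1,\dots,\lfloor k/2\rfloor$ let $I_j=[j/k,(j+1)/k)$ if $j<\lfloor k/2\rfloor$ and $I_{\lfloor k/2\rfloor}=[\lfloor k/2\rfloor/k,1/2]$; let $I^*_j=\{i:p_i\in I_j\}=\{j_1,\dots,j_{n_j}\}$ (listed in some fixed order, $n_j=|I^*_j|$), $p^j_i:=p_{j_i}$ and $\delta^j_i:=p^j_i-j/k$. Let $\mathcal{M}_1^*(k)=\bigcup_{j=\lfloor k^\alpha\rfloor}^{\lfloor k/2\rfloor}I^*_j$. Medium-expectation rounding: for $j=\lfloor k^\alpha\rfloor,\dots,\lfloor k/2\rfloor$ let $S_j=\sum_{i=1}^{n_j}\delta^j_i$, $m_j=\lfloor kS_j\rfloor$, and set $q_{j_i}=(j+1)/k$ for $i=1,\dots,m_j$ and $q_{j_i}=j/k$ for $i=m_j+1,\dots,n_j$. *)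

(* Defs.v *)
From Stdlib Require Import Reals Lra Lia ZArith Arith List.
Open Scope R_scope.

Definition inI (k j : nat) (x : R) : Prop :=
  if (j <? Nat.div k 2)%nat
  then INR j / INR k <= x < INR (j + 1) / INR k
  else INR j / INR k <= x <= 1 / 2.

Definition jlo (k : nat) (alpha : R) : nat :=
  Z.to_nat (Int_part (Rpower (INR k) alpha)).

(* i in M_1^*(k) (indices are 0..n-1) *)
Definition inM (n k : nat) (alpha : R) (p : nat -> R) (i : nat) : Prop :=
  (i < n)%nat /\
  exists j : nat, (jlo k alpha <= j <= Nat.div k 2)%nat /\ inI k j (p i).

(* l is an enumeration (some fixed order, no repetition) of I^*_j *)
Definition is_class (n k : nat) (p : nat -> R) (j : nat) (l : list nat) : Prop :=
  NoDup l /\ forall i, In i l <-> ((i < n)%nat /\ inI k j (p i)).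

Definition Sj (k j : nat) (p : nat -> R) (l : list nat) : R :=
  fold_right (fun i acc => (p i - INR j / INR k) + acc) 0 l.

Definition mj (k j : nat) (p : nat -> R) (l : list nat) : Z :=
  Int_part (INR k * Sj k j p l).

(* q is the medium-expectation rounding of p w.r.t. the enumerations ord j:
   the (t+1)-th listed element j_{t+1} gets (j+1)/k if t+1 <= m_j, else j/k. *)
Definition medium_rounding (k : nat) (alpha : R) (p : nat -> R)
  (ord : nat -> list nat) (q : nat -> R) : Prop :=
  forall j, (jlo k alpha <= j <= Nat.div k 2)%nat ->
  forall t, (t < length (ord j))%nat ->
    q (nth t (ord j) 0%nat) =
      if Z.ltb (Z.of_nat t) (mj k j p (ord j))
      then INR (j + 1) / INR k else INR j / INR k.

(* Law of a sum of independent indicators with means ps (Poisson binomial):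
   pb ps x = P(sum = x). *)
Fixpoint pb (ps : list R) (x : nat) : R :=
  match ps with
  | nil => if (x =? 0)%nat then 1 else 0
  | p :: ps' =>
      match x with
      | O => (1 - p) * pb ps' O
      | S x' => p * pb ps' x' + (1 - p) * pb ps' (S x')
      end
  end.

(* total variation distance between the laws of the two sums
   (both supported on {0,...,max(length ps, length qs)}) *)
Definition tv_sum (ps qs : list R) : R :=
  / 2 * sum_f_R0 (fun x => Rabs (pb ps x - pb qs x))
                 (Nat.max (length ps) (length qs)).

(* Main.v *)
Require Import Defs.
From Stdlib Require Import Reals Lra Lia ZArith Arith List.
Open Scope R_scope.

Definition sh (f : nat -> R) (x : nat) : R :=
  match x with O => 0 | S x' => f x' end.

Lemma pb_nonneg ps x : Forall (fun r => 0 <= r <= 1) ps -> 0 <= pb ps x.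
Proof.
  revert x; induction ps as [|a ps IH]; intros x HF.
  - simpl; destruct (x =? 0)%nat; lra.
  - inversion HF; subst. destruct x; simpl.
    + pose proof (IH 0%nat H2); nra.
    + pose proof (IH x H2); pose proof (IH (S x) H2); nra.
Qed.

Lemma pb_zero ps x : (length ps < x)%nat -> pb ps x = 0.
Proof.
  revert x; induction ps as [|a ps IH]; intros x Hx; simpl in *.
  - destruct x; [lia|reflexivity].
  - destruct x; [lia|]. rewrite !IH by lia. ring.
Qed.

Lemma pb_cons a ps x : pb (a :: ps) x = a * sh (pb ps) x + (1 - a) * pb ps x.
Proof. destruct x; simpl; ring. Qed.

Lemma sum_sh f M : sum_f_R0 (sh f) (S M) = sum_f_R0 f M.
Proof. induction M; simpl in *. ring. rewrite IHM. ring. Qed.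

Lemma sum_ext f g N : (forall x, f x = g x) -> sum_f_R0 f N = sum_f_R0 g N.
Proof. intros H; induction N; simpl; rewrite ?IHN, H; reflexivity. Qed.

Lemma sum_lin2 a b f g N :
  sum_f_R0 (fun x => a * f x + b * g x) N = a * sum_f_R0 f N + b * sum_f_R0 g N.
Proof. induction N; simpl; [|rewrite IHN]; ring. Qed.

Lemma sum_lin3 a b c f g h l N :
  sum_f_R0 (fun x => a * f x + b * g x + c * (h x + l x)) N =
  a * sum_f_R0 f N + b * sum_f_R0 g N + c * (sum_f_R0 h N + sum_f_R0 l N).
Proof. induction N; simpl; [|rewrite IHN]; ring. Qed.

Lemma sum_le f g N : (forall x, f x <= g x) -> sum_f_R0 f N <= sum_f_R0 g N.
Proof. intros H; induction N; simpl; [apply H|]. pose proof (H (S N)); lra. Qed.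

Lemma pb_sum ps N : (length ps <= N)%nat -> sum_f_R0 (pb ps) N = 1.
Proof.
  revert N; induction ps as [|a ps IH]; intros N HN.
  - simpl. clear HN. induction N; simpl; [reflexivity|]. rewrite IHN. ring.
  - simpl in HN. destruct N as [|M]; [lia|].
    rewrite (sum_ext _ (fun x => a * sh (pb ps) x + (1 - a) * pb ps x)) by apply pb_cons.
    rewrite sum_lin2, sum_sh. simpl sum_f_R0 at 2.
    rewrite IH by lia. rewrite pb_zero by lia. ring.
Qed.

Lemma key (a b A A' B B' : R) : 0 <= a <= 1 -> 0 <= B -> 0 <= B' ->
  Rabs (a * A' + (1 - a) * A - (b * B' + (1 - b) * B)) <=
  a * Rabs (A' - B') + (1 - a) * Rabs (A - B) + Rabs (a - b) * (B' + B).
Proof.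
  intros Ha HB HB'.
  replace (a * A' + (1 - a) * A - (b * B' + (1 - b) * B)) with
    (a * (A' - B') + (1 - a) * (A - B) + (a - b) * (B' - B)) by ring.
  eapply Rle_trans. apply Rabs_triang.
  eapply Rle_trans. apply Rplus_le_compat_r; apply Rabs_triang.
  rewrite !Rabs_mult, (Rabs_pos_eq a), (Rabs_pos_eq (1 - a)) by lra.
  apply Rplus_le_compat_l. apply Rmult_le_compat_l. apply Rabs_pos.
  unfold Rabs; destruct Rcase_abs; lra.
Qed.

Definition sumL (p q : nat -> R) (L : list nat) : R :=
  fold_right (fun i acc => Rabs (p i - q i) + acc) 0 L.

Lemma mainD (p q : nat -> R) (L : list nat) :
  (forall i, In i L -> 0 <= p i <= 1 /\ 0 <= q i <= 1) ->
  forall N, (length L <= N)%nat ->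
  sum_f_R0 (fun x => Rabs (pb (map p L) x - pb (map q L) x)) N <= 2 * sumL p q L.
Proof.
  induction L as [|i L IH]; intros HB N HN.
  - simpl. apply Rle_trans with (sum_f_R0 (fun _ => 0) N).
    + apply sum_le; intros x; rewrite Rminus_diag, Rabs_R0; lra.
    + clear HN HB; induction N; simpl in *; lra.
  - simpl in HN. destruct N as [|M]; [lia|].
    assert (HBL : forall i0, In i0 L -> 0 <= p i0 <= 1 /\ 0 <= q i0 <= 1)
      by (intros; apply HB; simpl; auto).
    assert (Fq : Forall (fun r => 0 <= r <= 1) (map q L)).
    { apply Forall_forall. intros r Hr. apply in_map_iff in Hr.
      destruct Hr as [y [<- Hy]]. apply HBL; auto. }
    destruct (HB i (or_introl eq_refl)) as [Hp Hq].
    set (a := pb (map p L)). set (b := pb (map q L)).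
    set (g := fun y => Rabs (a y - b y)).
    apply Rle_trans with (sum_f_R0 (fun x => p i * sh g x + (1 - p i) * g x
                     + Rabs (p i - q i) * (sh b x + b x)) (S M)).
    + apply sum_le. intros x. simpl map. rewrite !pb_cons.
      fold a b.
      replace (sh g x) with (Rabs (sh a x - sh b x))
        by (destruct x; simpl; [rewrite Rminus_diag, Rabs_R0|]; reflexivity).
      apply key; auto.
      * unfold b; apply pb_nonneg; auto.
      * destruct x; simpl; [lra|]. unfold b; apply pb_nonneg; auto.
    + rewrite sum_lin3, !sum_sh. simpl sum_f_R0 at 2 4.
      assert (Hz : g (S M) = 0).
      { unfold g, a, b. rewrite !pb_zero by (rewrite length_map; lia).
        rewrite Rminus_diag, Rabs_R0; reflexivity. }
      assert (Hbz : b (S M) = 0) by (unfold b; apply pb_zero; rewrite length_map; lia).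
      assert (Hs : sum_f_R0 b M = 1) by (unfold b; apply pb_sum; rewrite length_map; lia).
      rewrite Hz, Hbz, Hs.
      specialize (IH HBL M ltac:(lia)). fold a b g in IH.
      simpl sumL. lra.
Qed.

Lemma sumL_bound (p q : nat -> R) (L : list nat) (e : R) :
  (forall i, In i L -> Rabs (p i - q i) <= e) -> sumL p q L <= INR (length L) * e.
Proof.
  induction L as [|i L IH]; intros H.
  - simpl; lra.
  - change (sumL p q (i::L)) with (Rabs (p i - q i) + sumL p q L).
    change (length (i::L)) with (S (length L)). rewrite S_INR. pose proof (H i (or_introl eq_refl)).
    assert (sumL p q L <= INR (length L) * e) by (apply IH; intros; apply H; simpl; auto).
    lra.
Qed.

Theorem mainTheorem12 (alpha beta : R) (k n : nat) (p : nat -> R)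
  (ord : nat -> list nat) (q : nat -> R) (L : list nat) :
  0 < alpha < 1 -> 0 < beta < 1 -> (1 <= k)%nat ->
  (forall i, (i < n)%nat -> 0 <= p i <= 1) ->
  (forall j, (jlo k alpha <= j <= Nat.div k 2)%nat -> is_class n k p j (ord j)) ->
  medium_rounding k alpha p ord q ->
  NoDup L -> (forall i, In i L <-> inM n k alpha p i) ->
  INR (length L) <= Rpower (INR k) beta ->
  tv_sum (map p L) (map q L) <= 1 / Rpower (INR k) (1 - beta).
Proof.
  intros Ha Hb Hk Hp Hcl Hmr HND HL Hlen.
  assert (Hk0 : 0 < INR k) by (apply lt_0_INR; lia).
  assert (Hel : forall i, In i L ->
    (0 <= p i <= 1 /\ 0 <= q i <= 1) /\ Rabs (p i - q i) <= / INR k).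
  { intros i Hi. apply HL in Hi. destruct Hi as [Hin [j [Hj HI]]].
    destruct (Hcl j Hj) as [_ Hc].
    assert (Hij : In i (ord j)) by (apply Hc; auto).
    destruct (In_nth (ord j) i 0%nat Hij) as [t [Ht Hnth]].
    pose proof (Hmr j Hj t Ht) as Hq. rewrite Hnth in Hq.
    pose proof (Nat.div_mod k 2 ltac:(lia)).
    pose proof (Nat.mod_upper_bound k 2 ltac:(lia)).
    set (A := INR j / INR k) in *. set (B := INR (j + 1) / INR k) in *.
    assert (EA : A * INR k = INR j) by (unfold A; field; lra).
    assert (EB : B * INR k = INR j + 1) by (unfold B; rewrite plus_INR; simpl; field; lra).
    assert (Hj0 : 0 <= INR j) by apply pos_INR.
    assert (Hjk : INR (j + 1) <= INR k) by (apply le_INR; lia).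
    rewrite plus_INR in Hjk; simpl in Hjk.
    assert (HA0 : 0 <= A) by nra.
    assert (HB1 : B <= 1) by nra.
    assert (HBA : B - A = / INR k).
    { apply (Rmult_eq_reg_r (INR k)); [|lra].
      rewrite Rmult_minus_distr_r, EA, EB. field. lra. }
    assert (HpAB : A <= p i <= B).
    { unfold inI in HI; fold A B in HI. destruct (j <? Nat.div k 2)%nat eqn:E; [lra|].
      apply Nat.ltb_ge in E.
      assert (Hk2 : INR k <= 2 * (INR j + 1)).
      { replace 2 with (INR 2) by reflexivity. rewrite <- S_INR, <- mult_INR.
        apply le_INR; lia. }
      assert (1/2 <= B) by nra. lra. }
    split; [split; [apply Hp; auto|]|];
    destruct (Z.ltb (Z.of_nat t) (mj k j p (ord j))); rewrite Hq;
    try lra; unfold Rabs; destruct Rcase_abs; lra. }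
  unfold tv_sum. rewrite !length_map, Nat.max_id.
  assert (HD := mainD p q L (fun i Hi => proj1 (Hel i Hi)) (length L) (le_n _)).
  assert (HS := sumL_bound p q L (/ INR k) (fun i Hi => proj2 (Hel i Hi))).
  assert (HR : 0 < Rpower (INR k) beta) by (unfold Rpower; apply exp_pos).
  replace (1 - beta) with (1 + - beta) by ring. rewrite Rpower_plus, Rpower_Ropp, Rpower_1 by lra.
  replace (1 / (INR k * / Rpower (INR k) beta)) with (Rpower (INR k) beta * / INR k)
    by (field; lra).
  assert (Hik : 0 < / INR k) by (apply Rinv_0_lt_compat; lra).
  assert (INR (length L) * / INR k <= Rpower (INR k) beta * / INR k) by
    (apply Rmult_le_compat_r; lra).
  lra.
Qed.
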